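(* Let $M\ge 2$ be an integer. Consider the $M-1$ identifiers $\mathbf{r}^{(k)}=(r^{(k)}_1,\dots,r^{(k)}_M)$, $k=0,1,\dots,M-2$, of the group whose anchor position is $1$: $r^{(k)}_1=0$, and $(r^{(k)}_2,\dots,r^{(k)}_M)$ is the cyclic right shift by $k$ positions of $(1,2,\dots,M-1)$ (so $\mathbf{r}^{(0)}=(0,1,2,\dots,M-1)$, $\mathbf{r}^{(1)}=(0,M-1,1,2,\dots,M-2)$, $\dots$, $\mathbf{r}^{(M-2)}=(0,2,3,\dots,M-1,1)$). Then the $(M-1)\times M$ integer matrix whose $k$-th row is the coefficient vector $\big(2^{\,r_{\max}-r^{(k)}_1},\dots,2^{\,r_{\max}-r^{(k)}_M}\big)$ with $r_{\max}=M-1$ has rank $M-1$ (over $\mathbb{Q}$).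
   Context: A batch of $M$ data packets $c_1,\dots,c_M$ is encoded as follows: an encoded packet is specified by an identifier $(r_1,\dots,r_M)$ of nonnegative integers; each packet $c_m$ is padded with $r_m$ zero bits at its head (and zeros at its tail so all have equal length), which in ordinary integer arithmetic amounts to forming $2^{r_{\max}-r_m}c_m$ with $r_{\max}=\max_m r_m$, and the padded packets are XORed. The coefficient vector of the encoded packet is $(2^{r_{\max}-r_1},\dots,2^{r_{\max}-r_M})$, and ranks of collections of encoded packets are ranks of the matrices formed by these coefficient vectors, computed in ordinary (rational) arithmetic. In the first-round construction, the identifiers are the bijections $\{1,\dots,M\}\to\{0,1,\dots,M-1\}$ arranged into $M$ groups: the group with anchor position $g$ consists of the $M-1$ identifiers with $r_g=0$ whose entries at the positions other than $g$, read in increasing order of position, form the cyclic right shifts by $k=0,1,\dots,M-2$ of $(1,2,\dots,M-1)$. *)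

(* Defs.v *)
From mathcomp Require Import all_boot all_order all_algebra.
Set Implicit Arguments. Unset Strict Implicit. Unset Printing Implicit Defensive.
Import GRing.Theory Num.Theory.

(* Positions are 'I_M, 0-indexed. *)
Definition ident1 (M : nat) (k : nat) (j : 'I_M) : nat :=
  if (j : nat) == 0%N then 0%N
  else nth 0%N (rotr k (iota 1 M.-1)) j.-1.

Definition coef_mx (M : nat) : 'M[rat]_(M.-1, M) :=
  \matrix_(k < M.-1, j < M) ((2%:R : rat) ^+ (M.-1 - @ident1 M k j)%N)%R.

(* Main.v *)
Require Import Defs.
From mathcomp Require Import all_boot all_order all_algebra.
From mathcomp Require Import zify.
Import GRing.Theory Num.Theory.

Lemma nth_rotr_iota N k i : (k < N)%N -> (i < N)%N ->
  nth 0%N (rotr k (iota 1 N)) i =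
  (if (k <= i)%N then i - k + 1 else N - k + i + 1)%N.
Proof.
move=> kN iN; rewrite /rotr size_iota /rot nth_cat size_drop size_iota.
have -> : (N - (N - k) = k)%N by lia.
case: ltnP => ik.
  rewrite nth_drop nth_iota; last by lia.
  lia.
rewrite nth_take; last by lia.
rewrite nth_iota; last by lia.
lia.
Qed.

Definition ee N k i := (N - (if (k <= i)%N then i - k + 1 else N - k + i + 1))%N.

Lemma ee_diag N k : (k < N)%N -> ee N k k = N.-1.
Proof. rewrite /ee leqnn; lia. Qed.

Lemma predval N (l : 'I_N) :
  (ord_pred l : nat) = if (l : nat) == 0%N then N.-1 else (l : nat).-1.
Proof.
rewrite /ord_pred /=; have lN := ltn_ord l.
case: eqP => [->|l0].
  rewrite add0n modn_small //; lia.
have -> : ((l + N).-1 = l.-1 + N)%N by lia.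
rewrite modnDr modn_small //; lia.
Qed.

Lemma ee_pred_diag N (k : 'I_N) : ee N k (ord_pred k) = 0%N.
Proof.
rewrite /ee predval; have kN := ltn_ord k.
case: eqP => [k0|k0]; case: leqP => ?; lia.
Qed.

Lemma ee_pred_off N (k l : 'I_N) : k != l ->
  ee N k (ord_pred l) = (ee N k l).+1.
Proof.
move/eqP=> kl; have kl' : (k : nat) <> l by move=> h; apply: kl; apply: val_inj.
rewrite /ee predval; have kN := ltn_ord k; have lN := ltn_ord l.
case: eqP => l0.
  case: leqP => ?; case: leqP => ?; lia.
case: (leqP k l) => kl2; case: (leqP k (l : nat).-1) => kl3; lia.
Qed.

Section Aux.
Local Open Scope ring_scope.
Lemma aux n : \rank (coef_mx n.+2) = n.+1.
Proof.
set N := n.+1.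
pose B : 'M[rat]_N := (\matrix_(i, l)
  ((2%:R : rat) * (i == l)%:R - (i == ord_pred l)%:R))%R.
pose X : 'M[rat]_(n.+2, N) := (\matrix_(j, l)
  (if unlift ord0 j is Some i then B i l else 0))%R.
apply/eqP; rewrite eqn_leq rank_leq_row /=.
have H : \rank (((2%:R : rat) ^+ N - 1) *: (1%:M : 'M[rat]_N))%R = N.
  rewrite mxrank_scale_nz ?mxrank1 //.
  rewrite subr_eq0; apply/eqP => h.
  have : ((2 ^ N)%:R : rat) = 1%:R by rewrite natrX h.
  move/eqP; rewrite eqr_nat => /eqP.
  have : (2 <= 2 ^ N)%N by rewrite -{1}(expn1 2) leq_exp2l.
  lia.
apply: (@leq_trans (\rank (((2%:R : rat) ^+ N - 1) *: (1%:M : 'M[rat]_N))%R)); first by rewrite H.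
apply: leq_trans (mxrankM_maxl _ X).
apply: eq_leq; congr (\rank _); apply/matrixP => k l.
rewrite !mxE big_ord_recl /= !mxE unlift_none mulr0 add0r.
have HC : forall i : 'I_N, coef_mx n.+2 k (lift ord0 i) = (2%:R : rat) ^+ ee N k i.
  move=> i; rewrite mxE /ident1 /= add0n.
  have -> : (1%N :: iota 2 n) = iota 1 N by [].
  rewrite nth_rotr_iota //; exact: ltn_ord.
rewrite /X /B.
rewrite (eq_bigr (fun i : 'I_N => 2 * (2 ^+ ee N k i * (i == l)%:R)
   - 2 ^+ ee N k i * (i == ord_pred l)%:R)); last first.
  move=> i _; rewrite HC mxE liftK /=.
  by rewrite [in LHS]mxE mulrBr mulrCA.
rewrite big_split /= sumrN -mulr_sumr.
rewrite (bigD1 l) //= eqxx mulr1 big1; last first.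
  by move=> i /negPf ->; rewrite mulr0.
rewrite (bigD1 (ord_pred l)) // eqxx mulr1 big1; last first.
  by move=> i /negPf ->; rewrite mulr0.
rewrite !addr0.
case: (eqVneq k l) => [<-|kl].
  by rewrite ee_pred_diag ee_diag ?ltn_ord // mulr1 expr0 -exprS.
by rewrite ee_pred_off // exprS mulr0 !Monoid.simpm subrr.
Qed.

End Aux.

Theorem lemma1 (M : nat) (hM : (2 <= M)%N) :
  \rank (coef_mx M) = M.-1.
Proof.
case: M hM => [|[|n]] // _; exact: aux.
Qed.
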